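(* Let $G$ be a connected graph with minimum degree $\delta\geq 2$ such that $|d_i-d_j|\leq (2\delta-1)^{2}$ for every edge $v_iv_j\in E(G)$. Then $GA(G)>ABC(G)$.
   Context: All graphs are finite, simple and undirected; $d_i$ denotes the degree of vertex $v_i$. The first geometric-arithmetic index is $GA(G)=\sum_{v_iv_j\in E(G)}\frac{2\sqrt{d_id_j}}{d_i+d_j}$ and the atom-bond connectivity index is $ABC(G)=\sum_{v_iv_j\in E(G)}\sqrt{\frac{d_i+d_j-2}{d_id_j}}$. *)

(* Defs.v *)
From mathcomp Require Import all_boot all_order all_algebra.
Set Implicit Arguments. Unset Strict Implicit. Unset Printing Implicit Defensive.
Import Order.TTheory GRing.Theory Num.Theory.

Definition simple_graph (T : finType) (e : rel T) : Prop :=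
  symmetric e /\ irreflexive e.

Definition connected_graph (T : finType) (e : rel T) : Prop :=
  forall x y : T, connect e x y.

Definition deg (T : finType) (e : rel T) (v : T) : nat := #|[set u | e v u]|.

Definition is_min_degree (T : finType) (e : rel T) (delta : nat) : Prop :=
  (exists v, deg e v = delta) /\ (forall v, delta <= deg e v).

Local Open Scope ring_scope.

(* Sums over edges: each unordered edge {u,v} appears as two ordered pairs
   (u,v),(v,u); the summands are symmetric, so we halve the ordered sum. *)
Definition GA_index (R : rcfType) (T : finType) (e : rel T) : R :=
  (2%:R)^-1 * \sum_(u : T) \sum_(v : T | e u v)
    (2%:R * Num.sqrt ((deg e u)%:R * (deg e v)%:R) / ((deg e u)%:R + (deg e v)%:R)).

Definition ABC_index (R : rcfType) (T : finType) (e : rel T) : R :=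
  (2%:R)^-1 * \sum_(u : T) \sum_(v : T | e u v)
    Num.sqrt (((deg e u)%:R + (deg e v)%:R - 2%:R) / ((deg e u)%:R * (deg e v)%:R)).

Definition deg_gap (T : finType) (e : rel T) (u v : T) : nat :=
  absz (Posz (deg e u) - Posz (deg e v)).

(* Main.v *)
From Stdlib Require Import ZArith Lia Psatz.
Lemma keyZ (a k : Z) : (2 <= a)%Z -> (0 <= k)%Z -> (k <= (2*a-1)^2)%Z ->
  ((2*a+k)^2*(2*a+k-2) < 4*a^2*(a+k)^2)%Z.
Proof. intros. nia. Qed.
Lemma keyN (a k : nat) : (2 <= a)%nat -> (k <= (2*a-1)*(2*a-1))%nat ->
  ((2*a+k)*(2*a+k)*(2*a+k-2) < 4*(a*a)*((a+k)*(a+k)))%nat.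
Proof.
intros ha hk. pose proof (keyZ (Z.of_nat a) (Z.of_nat k)).
apply Nat2Z.inj_lt. rewrite !Nat2Z.inj_mul, Nat2Z.inj_sub by lia.
rewrite !Nat2Z.inj_add, !Nat2Z.inj_mul in *.
apply Nat2Z.inj_le in hk. rewrite !Nat2Z.inj_mul, Nat2Z.inj_sub, Nat2Z.inj_mul in hk by lia.
change (Z.of_nat 2) with 2%Z in *. change (Z.of_nat 4) with 4%Z in *. rewrite !Z.pow_2_r in H. nia.
Qed.
Require Import Defs.
From mathcomp Require Import all_boot all_order all_algebra.
From mathcomp Require Import zify ring lra.
Import Order.TTheory GRing.Theory Num.Theory.
Lemma key_nat a k : (2 <= a)%N -> (k <= (2*a-1)^2)%N ->
  ((2*a+k)^2*(2*a+k-2) < 4*a^2*(a+k)^2)%N.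
Proof.
move=> /ssrnat.leP ha /ssrnat.leP hk; apply/ssrnat.ltP.
rewrite !expnS !expn0 !muln1 in hk *.
rewrite -!plusE -!multE -!minusE in hk *.
exact (@keyN a k ha hk).
Qed.

Lemma sq_mono x y : (x <= y)%N -> (x^2 <= y^2)%N.
Proof. by move=> h; rewrite leq_exp2r. Qed.
Lemma keyn (a b d : nat) : (2 <= d)%N -> (d <= a)%N -> (d <= b)%N ->
  (absz (Posz a - Posz b) <= (2 * d - 1) ^ 2)%N ->
  ((a+b)^2*(a+b-2) < 4*a^2*b^2)%N.
Proof.
move=> hd ha hb hg.
wlog hab : a b ha hb hg / (a <= b)%N.
  move=> W; case: (leqP a b) => h; first exact: W.
  have := W b a hb ha. rewrite addnC mulnAC. apply; last by apply: ltnW.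
  by move: hg; lia.
have e : b = a + (b - a) by lia.
have hm : ((2*d-1)^2 <= (2*a-1)^2)%N by apply: sq_mono; lia.
have hk : (b - a <= (2*a-1)^2)%N.
  apply: leq_trans hm; apply: leq_trans hg; lia.
have := @key_nat a (b - a) (leq_trans hd ha) hk.
have -> : (2*a + (b-a) = a + b)%N by lia. by rewrite -e.
Qed.
Section TL.
Local Open Scope ring_scope.
Lemma termlt (R : rcfType) (a b : nat) : (2 <= a)%N -> (2 <= b)%N ->
  ((a+b)^2*(a+b-2) < 4*a^2*b^2)%N ->
  Num.sqrt ((a%:R + b%:R - 2%:R) / (a%:R * b%:R)) <
  (2%:R * Num.sqrt (a%:R * b%:R) / (a%:R + b%:R) : R).
Proof.

move=> ha hb h.
have hA : (2%:R <= a%:R :> R) by rewrite ler_nat.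
have hB : (2%:R <= b%:R :> R) by rewrite ler_nat.
set A := a%:R in hA *; set B := b%:R in hB *.
have hAB : 0 < A * B by apply: mulr_gt0; lra.
have hS : 0 < A + B by lra.
have h' : (A + B) ^+ 2 * (A + B - 2%:R) < 4%:R * A ^+ 2 * B ^+ 2.
  have : ((a+b)^2*(a+b-2))%:R < (4*a^2*b^2)%:R :> R by rewrite ltr_nat.
  rewrite natrM natrB ?natrX ?natrD ?natrM ?natrX //; last by lia.
set p := Num.sqrt _; set q := _ / _.
have p0 : 0 <= p by apply: sqrtr_ge0.
have q0 : 0 <= q by apply: divr_ge0; [apply: mulr_ge0; [lra|apply: sqrtr_ge0]|lra].
suff : p ^+ 2 < q ^+ 2 by move=> ?; nra.
rewrite /p sqr_sqrtr; last by apply: divr_ge0; lra.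
rewrite /q expr_div_n exprMn sqr_sqrtr; last lra.
rewrite ltr_pdivrMr // mulrAC ltr_pdivlMr; last by apply: exprn_gt0.
nra.
Qed.
End TL.


Theorem theorem3p5 (R : rcfType) (T : finType) (e : rel T) (delta : nat) :
  simple_graph e ->
  connected_graph e ->
  is_min_degree e delta ->
  (2 <= delta)%N ->
  (forall u v : T, e u v -> (deg_gap e u v <= (2 * delta - 1) ^ 2)%N) ->
  (ABC_index R e < GA_index R e)%R.
Proof.
move=> _ _ [[v0 _] hmin] hd hgap.
rewrite /ABC_index /GA_index ltr_pM2l; last by rewrite invr_gt0 ltr0n.
apply: ltr_sum; first by apply/hasP; exists v0; rewrite ?mem_index_enum.
move=> u _.
have hu : (2 <= deg e u)%N by apply: leq_trans hd (hmin u).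
apply: ltr_sum.
  have : (0 < #|[set w | e u w]|)%N by rewrite /deg in hu; lia.
  case/card_gt0P => w; rewrite inE => euw.
  by apply/hasP; exists w; rewrite ?mem_index_enum.
move=> w euw.
have hw : (2 <= deg e w)%N by apply: leq_trans hd (hmin w).
apply: termlt => //.
apply: (@keyn _ _ delta) => //; solve [exact: hmin | exact: hgap].
Qed.
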